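(* Let $\mathsf{T}$ be the algebra antihomomorphism of $U_{K,L,norm}$ (i.e. linear with $\mathsf{T}(xy)=\mathsf{T}(y)\mathsf{T}(x)$, $\mathsf{T}(\mathbf{1})=\mathbf{1}$) determined by $\mathsf{T}(K)=\overline{K}$, $\mathsf{T}(\overline{K})=K$, $\mathsf{T}(L)=\overline{L}$, $\mathsf{T}(\overline{L})=L$, $\mathsf{T}(E)=-E(\overline{K}+\overline{L})$, $\mathsf{T}(F)=-(K+L)F$. Then $\mathsf{T}$ is von Neumann regular with respect to convolution: $\mathsf{id}\star\mathsf{T}\star\mathsf{id}=\mathsf{id}$ and $\mathsf{T}\star\mathsf{id}\star\mathsf{T}=\mathsf{T}$.
   Context: Fix $q\in\mathbb{C}$, $q\neq 0,\pm1$. $U_{K,L,norm}$ is the unital associative $\mathbb{C}$-algebra generated by $K,\overline{K},L,\overline{L},E,F$ subject to $K\overline{K}K=K$, $\overline{K}K\overline{K}=\overline{K}$, $K\overline{K}=\overline{K}K$, $L\overline{L}L=L$, $\overline{L}L\overline{L}=\overline{L}$, $L\overline{L}=\overline{L}L$, $K\overline{K}+L\overline{L}=\mathbf{1}$, $KE=q^2EK$, $LE=q^2EL$, $\overline{K}E=q^{-2}E\overline{K}$, $\overline{L}E=q^{-2}E\overline{L}$, $KF=q^{-2}FK$, $LF=q^{-2}FL$, $\overline{K}F=q^2F\overline{K}$, $\overline{L}F=q^2F\overline{L}$, $EF-FE=\frac{(K+L)-(\overline{K}+\overline{L})}{q-q^{-1}}$. It is a bialgebra with the algebra homomorphisms $\Delta,\varepsilon$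 determined by $\Delta(K)=K\otimes K$, $\Delta(\overline{K})=\overline{K}\otimes\overline{K}$, $\Delta(L)=L\otimes L+L\otimes K+K\otimes L$, $\Delta(\overline{L})=\overline{L}\otimes\overline{L}+\overline{L}\otimes\overline{K}+\overline{K}\otimes\overline{L}$, $\Delta(E)=\mathbf{1}\otimes E+E\otimes(K+L)$, $\Delta(F)=F\otimes\mathbf{1}+(\overline{K}+\overline{L})\otimes F$, $\varepsilon(K)=\varepsilon(\overline{K})=1$, $\varepsilon(L)=\varepsilon(\overline{L})=\varepsilon(E)=\varepsilon(F)=0$. For linear maps $A,B$ of $U_{K,L,norm}$, the convolution is $A\star B=\mu\circ(A\otimes B)\circ\Delta$, where $\mu$ is the multiplication. *)

(* Defs.v *)
(* The algebra U_{K,L,norm} is built as the free associative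
   algebra on six generators (formal linear combinations of words) modulo the
   two-sided ideal generated by the defining relations. *)
From HB Require Import structures.
From mathcomp Require Import all_boot all_order all_algebra.
Set Implicit Arguments. Unset Strict Implicit. Unset Printing Implicit Defensive.
Import Order.TTheory GRing.Theory Num.Theory.
Local Open Scope ring_scope.

Inductive gen := gK | gKb | gL | gLb | gE | gF.

Definition gen_eqb (a b : gen) : bool :=
  match a, b with
  | gK, gK | gKb, gKb | gL, gL | gLb, gLb | gE, gE | gF, gF => true
  | _, _ => false
  end.

Lemma gen_eqP : Equality.axiom gen_eqb.
Proof. by do 2 case; constructor. Qed.

HB.instance Definition _ := hasDecEq.Build gen gen_eqP.

Definition word := seq gen.

Section Free.
Variable R : nzRingType.

(* an element of the free algebra: formal sum  sum_i c_i * w_i  *)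
Definition fsum := seq (R * word).
Definition fcoef (p : fsum) (w : word) : R := \sum_(cw <- p | cw.2 == w) cw.1.
Definition fscale (a : R) (p : fsum) : fsum := [seq (a * cw.1, cw.2) | cw <- p].
Definition fmul (p q : fsum) : fsum :=
  [seq (x.1 * y.1, x.2 ++ y.2) | x <- p, y <- q].
Definition fone : fsum := [:: (1, [::])].
Definition fword (w : word) : fsum := [:: (1, w)].
Definition fgen (g : gen) : fsum := fword [:: g].
Definition fsub (p q : fsum) : fsum := p ++ fscale (-1) q.
Definition fprod (ps : seq fsum) : fsum := foldr fmul fone ps.

(* elements of the free algebra tensor itself: sum_i c_i * (a_i (x) b_i) *)
Definition tsum := seq (R * word * word).
Definition tscale (a : R) (t : tsum) : tsum :=
  [seq (a * x.1.1, x.1.2, x.2) | x <- t].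
Definition tmul (s t : tsum) : tsum :=
  [seq (x.1.1 * y.1.1, x.1.2 ++ y.1.2, x.2 ++ y.2) | x <- s, y <- t].
Definition tone : tsum := [:: (1, [::], [::])].

Definition Delta_gen (g : gen) : tsum :=
  match g with
  | gK => [:: (1, [:: gK], [:: gK])]
  | gKb => [:: (1, [:: gKb], [:: gKb])]
  | gL => [:: (1, [:: gL], [:: gL]); (1, [:: gL], [:: gK]); (1, [:: gK], [:: gL])]
  | gLb => [:: (1, [:: gLb], [:: gLb]); (1, [:: gLb], [:: gKb]); (1, [:: gKb], [:: gLb])]
  | gE => [:: (1, [::], [:: gE]); (1, [:: gE], [:: gK]); (1, [:: gE], [:: gL])]
  | gF => [:: (1, [:: gF], [::]); (1, [:: gKb], [:: gF]); (1, [:: gLb], [:: gF])]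
  end.

Definition Delta_word (w : word) : tsum := foldr tmul tone (map Delta_gen w).
Definition Delta (p : fsum) : tsum :=
  flatten [seq tscale cw.1 (Delta_word cw.2) | cw <- p].

(* convolution  A * B = mu o (A (x) B) o Delta  of linear maps *)
Definition conv (A B : fsum -> fsum) (p : fsum) : fsum :=
  flatten [seq fscale t.1.1 (fmul (A (fword t.1.2)) (B (fword t.2))) | t <- Delta p].

Definition T_gen (g : gen) : fsum :=
  match g with
  | gK => fgen gKb
  | gKb => fgen gK
  | gL => fgen gLb
  | gLb => fgen gL
  | gE => [:: (-1, [:: gE; gKb]); (-1, [:: gE; gLb])]
  | gF => [:: (-1, [:: gK; gF]); (-1, [:: gL; gF])]
  end.

Definition T_word (w : word) : fsum := fprod (rev (map T_gen w)).
Definition Tmap (p : fsum) : fsum :=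
  flatten [seq fscale cw.1 (T_word cw.2) | cw <- p].

End Free.

Section Rels.
Variable R : unitRingType.
Variable q : R.

Local Notation fw := (@fword R).
Local Notation fg := (@fgen R).

(* each relation a = b is encoded by the relator a - b *)
Definition rels : seq (fsum R) := [::
  fsub (fw [:: gK; gKb; gK]) (fw [:: gK]);
  fsub (fw [:: gKb; gK; gKb]) (fw [:: gKb]);
  fsub (fw [:: gK; gKb]) (fw [:: gKb; gK]);
  fsub (fw [:: gL; gLb; gL]) (fw [:: gL]);
  fsub (fw [:: gLb; gL; gLb]) (fw [:: gLb]);
  fsub (fw [:: gL; gLb]) (fw [:: gLb; gL]);
  fsub (fw [:: gK; gKb] ++ fw [:: gL; gLb]) (fone R);
  fsub (fw [:: gK; gE]) (fscale (q ^+ 2) (fw [:: gE; gK]));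
  fsub (fw [:: gL; gE]) (fscale (q ^+ 2) (fw [:: gE; gL]));
  fsub (fw [:: gKb; gE]) (fscale (q ^- 2) (fw [:: gE; gKb]));
  fsub (fw [:: gLb; gE]) (fscale (q ^- 2) (fw [:: gE; gLb]));
  fsub (fw [:: gK; gF]) (fscale (q ^- 2) (fw [:: gF; gK]));
  fsub (fw [:: gL; gF]) (fscale (q ^- 2) (fw [:: gF; gL]));
  fsub (fw [:: gKb; gF]) (fscale (q ^+ 2) (fw [:: gF; gKb]));
  fsub (fw [:: gLb; gF]) (fscale (q ^+ 2) (fw [:: gF; gLb]));
  fsub (fsub (fw [:: gE; gF]) (fw [:: gF; gE]))
       (fscale ((q - q^-1)^-1) (fsub (fg gK ++ fg gL) (fg gKb ++ fg gLb)))
].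

Inductive in_ideal : fsum R -> Prop :=
| ideal_rel i : (i < size rels)%N -> in_ideal (nth [::] rels i)
| ideal_add p1 p2 : in_ideal p1 -> in_ideal p2 -> in_ideal (p1 ++ p2)
| ideal_mul a p b : in_ideal p -> in_ideal (fmul a (fmul p b))
| ideal_ext p p' : (forall w, fcoef p w = fcoef p' w) -> in_ideal p -> in_ideal p'.

(* equality in U_{K,L,norm} of the classes of two free elements *)
Definition Ueq (p p' : fsum R) : Prop := in_ideal (fsub p p').

End Rels.

(* Main.v *)
Require Import Defs.
From HB Require Import structures.
From mathcomp Require Import all_boot all_order all_algebra.
From Stdlib Require Import Setoid Morphisms.
Import GRing.Theory Num.Theory.
Local Open Scope ring_scope.
Set Implicit Arguments. Unset Strict Implicit.

Section Basic.
Variable R : fieldType.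
Implicit Types p r : fsum R.

Definition feq p r := forall w, fcoef p w = fcoef r w.

Lemma fcoef_cat p r w : fcoef (p ++ r) w = fcoef p w + fcoef r w.
Proof. by rewrite /fcoef big_cat. Qed.
Lemma fcoef_nil w : fcoef ([::] : fsum R) w = 0.
Proof. by rewrite /fcoef big_nil. Qed.
Lemma fcoef_cons c u p w : fcoef ((c,u)::p) w = (u == w)%:R * c + fcoef p w.
Proof. by rewrite /fcoef big_cons /=; case: (u == w); rewrite ?mul1r ?mul0r ?add0r. Qed.
Lemma fcoef_scale a p w : fcoef (fscale a p) w = a * fcoef p w.
Proof. by rewrite /fcoef big_map mulr_sumr. Qed.
Lemma fcoef_flatten (s : seq (fsum R)) w :
  fcoef (flatten s) w = \sum_(x <- s) fcoef x w.
Proof. elim: s => [|x s IH] /=; first by rewrite fcoef_nil big_nil.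
by rewrite fcoef_cat IH big_cons. Qed.
Lemma fcoef_mul1 x r w : fcoef [seq (x.1 * y.1, x.2 ++ y.2) | y <- r] w =
   x.1 * fcoef [seq (y.1, x.2 ++ y.2) | y <- r] w.
Proof. rewrite /fcoef !big_map mulr_sumr; apply: eq_bigr => //. Qed.
Lemma fmul_cons x p r : fmul (x :: p) r = [seq (x.1 * y.1, x.2 ++ y.2) | y <- r] ++ fmul p r.
Proof. by []. Qed.
Lemma fmul_catl p p' r : fmul (p ++ p') r = fmul p r ++ fmul p' r.
Proof. by rewrite /fmul allpairs_cat. Qed.
Lemma fmul_catr p r r' w : fcoef (fmul p (r ++ r')) w = fcoef (fmul p r ++ fmul p r') w.
Proof.
elim: p => [|x p IH] //=; rewrite !fcoef_cat IH map_cat !fcoef_cat.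
by rewrite !addrA; congr (_ + _); rewrite -!addrA; congr (_ + _); rewrite addrC.
Qed.

Lemma fmul_nilr p : fmul p ([::] : fsum R) = [::].
Proof. by rewrite /fmul allpairs0r. Qed.
Lemma fmul_scalel a p r : fmul (fscale a p) r = fscale a (fmul p r).
Proof.
elim: p => [|x p IH] //=; rewrite !fmul_cons IH /fscale map_cat -!map_comp.
by congr (_ ++ _); apply: eq_map => y /=; rewrite mulrA.
Qed.
Lemma fmul_scaler a p r w : fcoef (fmul p (fscale a r)) w = fcoef (fscale a (fmul p r)) w.
Proof.
elim: p => [|x p IH]; first by [].
rewrite !fmul_cons fcoef_scale !fcoef_cat IH fcoef_scale mulrDr; congr (_ + _).
rewrite /fcoef !big_map mulr_sumr; apply: eq_bigr => y _ /=; by rewrite mulrCA.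
Qed.
Lemma fmul1r p : fmul (fone R) p = p.
Proof. by rewrite /fmul /= cats0; elim: p => [|[c u] p IH] //=; rewrite IH mul1r. Qed.
Lemma fmulr1 p : fmul p (fone R) = p.
Proof. by elim: p => [|[c u] p IH] //=; rewrite fmul_cons IH /= mulr1 cats0. Qed.
Lemma fmul_map x r s : fmul [seq (x.1 * y.1, x.2 ++ y.2) | y <- r] s =
   [seq (x.1 * z.1, x.2 ++ z.2) | z <- fmul r s].
Proof.
elim: r => [|y r IH] //=; rewrite !fmul_cons IH !map_cat -!map_comp.
congr (_ ++ _); apply: eq_map => z /=; by rewrite mulrA catA.
Qed.
Lemma fmulA p r s : fmul (fmul p r) s = fmul p (fmul r s).
Proof. by elim: p => [|x p IH] //=; rewrite !fmul_cons fmul_catl IH fmul_map. Qed.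

Lemma feq_refl p : feq p p. Proof. by []. Qed.
Lemma feq_sym p r : feq p r -> feq r p. Proof. by move=> H w; rewrite H. Qed.
Lemma feq_trans p r s : feq p r -> feq r s -> feq p s.
Proof. by move=> H1 H2 w; rewrite H1 H2. Qed.

Variable q : R.
Notation I := (@in_ideal R q).

Lemma I0 : I [::].
Proof. exact: (@ideal_mul _ q [::] _ [::] (@ideal_rel _ q 0 isT)). Qed.
Lemma I_feq p r : feq p r -> I p -> I r.
Proof. by move=> H; apply: ideal_ext. Qed.
Lemma I_scale a p : I p -> I (fscale a p).
Proof.
move=> H; have := ideal_mul [:: (a, [::])] (fone R) H.
by rewrite fmulr1 /fmul /= cats0.
Qed.
Lemma I_mull a p : I p -> I (fmul a p).
Proof. by move=> H; have := ideal_mul a (fone R) H; rewrite fmulr1. Qed.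
Lemma I_mulr a p : I p -> I (fmul p a).
Proof. by move=> H; have := ideal_mul (fone R) a H; rewrite fmul1r. Qed.

Lemma Ueq_feq p r : feq p r -> Ueq q p r.
Proof.
move=> H; apply: (I_feq _ I0) => w; rewrite /fsub fcoef_cat fcoef_scale H fcoef_nil.
by rewrite mulN1r subrr.
Qed.
Lemma Ueq_refl p : Ueq q p p. Proof. exact: Ueq_feq. Qed.
Lemma Ueq_sym p r : Ueq q p r -> Ueq q r p.
Proof.
move=> /(I_scale (-1)); apply: I_feq => w.
rewrite /fsub fcoef_scale !fcoef_cat !fcoef_scale !mulN1r opprD opprK addrC //.
Qed.
Lemma Ueq_trans p r s : Ueq q p r -> Ueq q r s -> Ueq q p s.
Proof.
move=> H1 H2; apply: (I_feq _ (ideal_add H1 H2)) => w.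
rewrite /fsub !fcoef_cat !fcoef_scale !mulN1r addrA addrNK //.
Qed.
Lemma Ueq_cat p p' r r' : Ueq q p p' -> Ueq q r r' -> Ueq q (p ++ r) (p' ++ r').
Proof.
move=> H1 H2; apply: (I_feq _ (ideal_add H1 H2)) => w.
rewrite /fsub !fcoef_cat !fcoef_scale !fcoef_cat !mulrDr !addrA; congr (_ + _).
by rewrite -!addrA; congr (_ + _); rewrite addrC.
Qed.
Lemma Ueq_scale a p p' : Ueq q p p' -> Ueq q (fscale a p) (fscale a p').
Proof.
move=> /(I_scale a); apply: I_feq => w.
by rewrite /fsub !fcoef_scale !fcoef_cat !fcoef_scale mulrDr mulrCA.
Qed.
Lemma Ueq_mul p p' r r' : Ueq q p p' -> Ueq q r r' -> Ueq q (fmul p r) (fmul p' r').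
Proof.
move=> H1 H2; apply: (@Ueq_trans _ (fmul p' r)).
  by move: (I_mulr r H1); rewrite /fsub fmul_catl fmul_scalel.
move: (I_mull p' H2); apply: I_feq => w.
by rewrite /fsub fmul_catr !fcoef_cat fmul_scaler.
Qed.
End Basic.

Instance Ueq_Equiv (R : fieldType) (q : R) : Equivalence (@Ueq R q).
Proof. split; [exact: Ueq_refl | exact: Ueq_sym | exact: Ueq_trans]. Qed.
Instance cat_Ueq (R : fieldType) (q : R) :
  Proper (@Ueq R q ==> @Ueq R q ==> @Ueq R q) (@cat (R * word)).
Proof. by move=> ? ? ? ? ? ?; apply: Ueq_cat. Qed.
Instance fmul_Ueq (R : fieldType) (q : R) :
  Proper (@Ueq R q ==> @Ueq R q ==> @Ueq R q) (@fmul R).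
Proof. by move=> ? ? ? ? ? ?; apply: Ueq_mul. Qed.
Instance fscale_Ueq (R : fieldType) (q : R) :
  Proper (eq ==> @Ueq R q ==> @Ueq R q) (@fscale R).
Proof. by move=> ? ? -> ? ? ?; apply: Ueq_scale. Qed.

Section TSsec.
Variable R : fieldType.
Variable q : R.
Local Notation "p =~ r" := (@Ueq R q p r) (at level 70).
Implicit Types (p r : fsum R) (t s u : tsum R) (F G : word -> word -> fsum R).

Definition TS t F : fsum R := flatten [seq fscale x.1.1 (F x.1.2 x.2) | x <- t].

Lemma TS_cons x t F : TS (x :: t) F = fscale x.1.1 (F x.1.2 x.2) ++ TS t F.
Proof. by []. Qed.
Lemma TS_cat t t' F : TS (t ++ t') F = TS t F ++ TS t' F.
Proof. by rewrite /TS map_cat flatten_cat. Qed.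
Lemma TS_ext t F G : (forall a b, F a b =~ G a b) -> TS t F =~ TS t G.
Proof. move=> H; elim: t => [|x t IH]; first reflexivity. rewrite !TS_cons IH; apply: Ueq_cat; [apply: Ueq_scale; apply: H | reflexivity]. Qed.
Lemma fscale1 p : fscale 1 p = p.
Proof. by elim: p => [|[c u] p IH] //=; rewrite /fscale /= mul1r; congr (_ :: _). Qed.
Lemma fscaleA a b p : fscale a (fscale b p) = fscale (a * b) p.
Proof. by rewrite /fscale -map_comp; apply: eq_map => x /=; rewrite mulrA. Qed.
Lemma fscale_cat a p r : fscale a (p ++ r) = fscale a p ++ fscale a r.
Proof. exact: map_cat. Qed.
Lemma fscale_flatten a (l : seq (fsum R)) : fscale a (flatten l) = flatten (map (fscale a) l).
Proof. by elim: l => [|x l IH] //=; rewrite fscale_cat IH. Qed.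
Lemma fscale_TS a t F : fscale a (TS t F) = TS t (fun a1 b1 => fscale a (F a1 b1)).
Proof.
rewrite /TS fscale_flatten -map_comp; congr flatten; apply: eq_map => x /=.
by rewrite !fscaleA mulrC.
Qed.
Lemma fmul_TSl t F P : fmul (TS t F) P = TS t (fun a1 b1 => fmul (F a1 b1) P).
Proof. by elim: t => [|x t IH] //=; rewrite !TS_cons fmul_catl fmul_scalel IH. Qed.
Lemma fmul_TSr t F P : fmul P (TS t F) =~ TS t (fun a1 b1 => fmul P (F a1 b1)).
Proof.
apply: Ueq_feq; elim: t => [|x t IH] w /=; first by rewrite /TS /= fmul_nilr.
by rewrite !TS_cons fmul_catr !fcoef_cat fmul_scaler IH.
Qed.
Lemma TS_tmul s u F :
  TS (tmul s u) F = TS s (fun a b => TS u (fun a' b' => F (a ++ a') (b ++ b'))).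
Proof.
elim: s => [|x s IH] //=; rewrite TS_cons -IH /tmul /= TS_cat; congr (_ ++ _).
rewrite fscale_TS /TS -map_comp; congr flatten; apply: eq_map => y /=.
by rewrite fscaleA mulrC.
Qed.
Lemma TS_tone F : TS (tone R) F = F [::] [::].
Proof. by rewrite /TS /= cats0 fscale1. Qed.
Lemma TS_tscale c t F : TS (tscale c t) F = fscale c (TS t F).
Proof.
rewrite /TS fscale_flatten -!map_comp; congr flatten; apply: eq_map => x /=.
by rewrite fscaleA.
Qed.
Lemma Delta_word_cons g (w : word) : Delta_word R (g :: w) = tmul (Delta_gen R g) (Delta_word R w).
Proof. by []. Qed.
Lemma TS_Delta_cat (w1 w2 : word) F :
  TS (Delta_word R (w1 ++ w2)) F =~
  TS (Delta_word R w1) (fun a b => TS (Delta_word R w2) (fun a' b' => F (a ++ a') (b ++ b'))).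
Proof.
elim: w1 F => [|g u IH] F; first by rewrite /= TS_tone; try reflexivity.
rewrite cat_cons !Delta_word_cons !TS_tmul; apply: TS_ext => a b; rewrite IH.
by apply: TS_ext => a1 b1; apply: TS_ext => a2 b2; rewrite !catA; try reflexivity.
Qed.
Lemma convE A B p : conv A B p = TS (Delta p) (fun a b => fmul (A (fword R a)) (B (fword R b))).
Proof. by []. Qed.
Lemma conv_word A B w :
  conv A B (fword R w) = TS (Delta_word R w) (fun a b => fmul (A (fword R a)) (B (fword R b))).
Proof.
rewrite convE; have -> : Delta (fword R w) = tscale 1 (Delta_word R w) by rewrite /Delta /= cats0.
by rewrite TS_tscale fscale1.
Qed.
Lemma conv_cons A B c w p :
  conv A B ((c, w) :: p) =
  fscale c (TS (Delta_word R w) (fun a b => fmul (A (fword R a)) (B (fword R b)))) ++ conv A B p.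
Proof.
rewrite !convE; have -> : Delta ((c, w) :: p) = tscale c (Delta_word R w) ++ Delta p by [].
by rewrite TS_cat TS_tscale.
Qed.
End TSsec.
Lemma fcoef_cons' (R : fieldType) c u (p : fsum R) w :
  fcoef ((c,u)::p) w = (if u == w then c else 0) + fcoef p w.
Proof. by rewrite /fcoef big_cons /=; case: (u == w); rewrite ?add0r. Qed.

Section Words.
Variable R : fieldType.
Variable q : R.
Local Notation "p =~ r" := (@Ueq R q p r) (at level 70).
Local Notation fw := (fword R).
Implicit Types (p r z : fsum R) (u v : word).

Lemma fw_cat u v : fw (u ++ v) = fmul (fw u) (fw v).
Proof. by rewrite /fmul /fword /= mulr1. Qed.
Lemma fw_nil : fw [::] = fone R.
Proof. by []. Qed.
Lemma fw_cons g v : fw (g :: v) = fmul (fgen R g) (fw v).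
Proof. exact: (fw_cat [:: g] v). Qed.
Lemma Tmap_fw u : Tmap (fw u) = T_word R u.
Proof. by rewrite /Tmap /= cats0 fscale1. Qed.
Lemma fprod_cat (l1 l2 : seq (fsum R)) : Defs.fprod (l1 ++ l2) = fmul (Defs.fprod l1) (Defs.fprod l2).
Proof. elim: l1 => [|x l IH] /=; first by rewrite fmul1r. by rewrite IH fmulA. Qed.
Lemma T_word_cat u v : T_word R (u ++ v) = fmul (T_word R v) (T_word R u).
Proof. by rewrite /T_word map_cat rev_cat fprod_cat. Qed.
Lemma fmul_scaleR p c r : fmul p (fscale c r) =~ fscale c (fmul p r).
Proof. apply: Ueq_feq => w; exact: fmul_scaler. Qed.
Lemma fmul_catR p r s : fmul p (r ++ s) =~ fmul p r ++ fmul p s.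
Proof. apply: Ueq_feq => w; exact: fmul_catr. Qed.

Definition central z := forall p, fmul z p =~ fmul p z.

Lemma central_Ueq z z' : z =~ z' -> central z -> central z'.
Proof. by move=> H Hz p; rewrite -H. Qed.
Lemma central_mul z z' : central z -> central z' -> central (fmul z z').
Proof. move=> H H' p; rewrite fmulA (H' p) -[fmul z (fmul p z')]fmulA (H p) fmulA; try reflexivity. Qed.
Lemma central_one : central (fone R).
Proof. by move=> p; rewrite fmul1r fmulr1; try reflexivity. Qed.
Lemma central_nil : central [::].
Proof. by move=> p; rewrite fmul_nilr; try reflexivity. Qed.
Lemma central_gen z : (forall g, fmul z (fgen R g) =~ fmul (fgen R g) z) -> central z.
Proof.
move=> H; have Hw : forall u, fmul z (fw u) =~ fmul (fw u) z.
  elim=> [|g u IH]; first by rewrite fw_nil fmul1r fmulr1; try reflexivity.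
  rewrite fw_cons -[fmul z (fmul _ _)]fmulA H fmulA IH fmulA; try reflexivity.
elim=> [|[c u] p IH]; first by rewrite fmul_nilr; try reflexivity.
have -> : (c, u) :: p = fscale c (fw u) ++ p by rewrite /fscale /= mulr1.
rewrite fmul_catR fmul_catl fmul_scaleR fmul_scalel Hw IH; try reflexivity.
Qed.

Definition Phi u := conv id (@Tmap R) (fw u).
Definition Psi u := conv (conv id (@Tmap R)) id (fw u).
Definition Theta u := conv (@Tmap R) id (fw u).
Definition Omega u := conv (conv (@Tmap R) id) (@Tmap R) (fw u).

Lemma PhiE v : Phi v = TS (Delta_word R v) (fun a b => fmul (fw a) (Tmap (fw b))).
Proof. exact: conv_word. Qed.
Lemma PsiE v : Psi v = TS (Delta_word R v) (fun a b => fmul (Phi a) (fw b)).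
Proof. exact: conv_word. Qed.
Lemma ThetaE v : Theta v = TS (Delta_word R v) (fun a b => fmul (Tmap (fw a)) (fw b)).
Proof. exact: conv_word. Qed.
Lemma OmegaE v : Omega v = TS (Delta_word R v) (fun a b => fmul (Theta a) (Tmap (fw b))).
Proof. exact: conv_word. Qed.

Lemma Phi_cat u v : central (Phi v) -> Phi (u ++ v) =~ fmul (Phi v) (Phi u).
Proof.
move=> Hc; rewrite !PhiE TS_Delta_cat.
rewrite fmul_TSr; apply: TS_ext => a b.
rewrite (@TS_ext _ _ _ _ (fun a' b' => fmul (fw a) (fmul (fmul (fw a') (Tmap (fw b'))) (Tmap (fw b))))); last first.
  by move=> a' b'; rewrite /= !Tmap_fw fw_cat T_word_cat !fmulA; try reflexivity.
rewrite -fmul_TSr -fmul_TSl -PhiE -fmulA -(Hc (fw a)) fmulA; try reflexivity.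
Qed.

Lemma Tmap_nil : Tmap (fw [::]) = fone R.
Proof. by rewrite Tmap_fw. Qed.
Lemma Phi_nil : Phi [::] =~ fone R.
Proof. by rewrite PhiE /= TS_tone Tmap_nil fw_nil fmul1r; try reflexivity. Qed.
Lemma Phi_central : (forall g, central (Phi [:: g])) -> forall w, central (Phi w).
Proof.
move=> H; elim=> [|g w IH]; first exact: (central_Ueq (Ueq_sym Phi_nil) central_one).
apply: (central_Ueq (Ueq_sym (Phi_cat [:: g] IH))); exact: central_mul.
Qed.
Lemma swap_c z x y r : central z -> fmul (fmul z x) (fmul y r) =~ fmul (fmul x y) (fmul z r).
Proof.
move=> Hz; rewrite fmulA -[fmul x (fmul y r)]fmulA -[fmul z (fmul (fmul x y) r)]fmulA (Hz (fmul x y)) fmulA; try reflexivity.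
Qed.
Lemma Psi_cat : (forall w, central (Phi w)) -> forall u v, Psi (u ++ v) =~ fmul (Psi u) (Psi v).
Proof.
move=> Hc u v; rewrite !PsiE TS_Delta_cat fmul_TSl; apply: TS_ext => a b.
rewrite -PsiE PsiE fmul_TSr; apply: TS_ext => a' b'.
rewrite fw_cat (Phi_cat a (Hc a')) swap_c //; reflexivity.
Qed.
Lemma Psi_nil : Psi [::] =~ fone R.
Proof. by rewrite PsiE /= TS_tone Phi_nil fw_nil fmul1r; try reflexivity. Qed.
Lemma Psi_word : (forall w, central (Phi w)) -> (forall g, Psi [:: g] =~ fw [:: g]) ->
  forall w, Psi w =~ fw w.
Proof.
move=> Hc Hg; elim=> [|g w IH]; first by rewrite Psi_nil fw_nil; reflexivity.
rewrite -cat1s (Psi_cat Hc) Hg IH fw_cat; reflexivity.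
Qed.

Lemma fcoef_TS (t : tsum R) (F : word -> word -> fsum R) w : fcoef (TS t F) w = \sum_(x <- t) x.1.1 * fcoef (F x.1.2 x.2) w.
Proof. by rewrite /TS fcoef_flatten big_map; apply: eq_bigr => x _; rewrite fcoef_scale. Qed.
Lemma TS_exch (s t : tsum R) (H : word -> word -> word -> word -> fsum R) :
  TS s (fun a b => TS t (fun a' b' => H a b a' b')) =~
  TS t (fun a' b' => TS s (fun a b => H a b a' b')).
Proof.
apply: Ueq_feq => w; rewrite !fcoef_TS.
under eq_bigr => x _ do rewrite fcoef_TS mulr_sumr.
rewrite exchange_big; apply: eq_bigr => y _; rewrite fcoef_TS mulr_sumr.
by apply: eq_bigr => x _; rewrite mulrCA.
Qed.

Lemma ThetaTE u v : central (Theta u) -> Theta (u ++ v) =~ fmul (Theta u) (Theta v).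
Proof.
move=> Hc; rewrite !ThetaE TS_Delta_cat.
rewrite (@TS_ext _ _ _ _ (fun a b => TS _ (fun a' b' => fmul (Tmap (fw a')) (fmul (fmul (Tmap (fw a)) (fw b)) (fw b'))))); last first.
  move=> a b; apply: TS_ext => a' b'.
  by rewrite !Tmap_fw fw_cat T_word_cat !fmulA; try reflexivity.
rewrite TS_exch fmul_TSr; apply: TS_ext => a' b'.
rewrite -fmul_TSr -fmul_TSl -ThetaE -fmulA -(Hc (Tmap (fw a'))) fmulA; try reflexivity.
Qed.
Lemma Theta_nil : Theta [::] =~ fone R.
Proof. by rewrite ThetaE /= TS_tone Tmap_nil fw_nil fmul1r; try reflexivity. Qed.
Lemma Theta_central : (forall g, central (Theta [:: g])) -> forall w, central (Theta w).
Proof.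
move=> H; elim=> [|g w IH]; first exact: (central_Ueq (Ueq_sym Theta_nil) central_one).
apply: (central_Ueq (Ueq_sym (ThetaTE w (H g)))); exact: central_mul.
Qed.
Lemma Omega_nil : Omega [::] =~ fone R.
Proof. by rewrite OmegaE /= TS_tone Theta_nil Tmap_nil fmul1r; try reflexivity. Qed.
Lemma Omega_word : (forall w, central (Theta w)) ->
  (forall g, Omega [:: g] =~ Tmap (fw [:: g])) -> forall w, Omega w =~ Tmap (fw w).
Proof.
move=> Hc Hg; elim=> [|g w IH]; first by rewrite Omega_nil Tmap_nil; reflexivity.
rewrite -cat1s OmegaE TS_Delta_cat.
rewrite (@TS_ext _ _ _ _ (fun a b => fmul (Tmap (fw w)) (fmul (Theta a) (Tmap (fw b))))); last first.
  move=> a b.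
  rewrite (@TS_ext _ _ _ _ (fun a' b' => fmul (Theta a) (fmul (fmul (Theta a') (Tmap (fw b'))) (Tmap (fw b))))); last first.
    move=> a' b'; rewrite (ThetaTE a' (Hc a)) !Tmap_fw T_word_cat !fmulA; try reflexivity.
  rewrite -fmul_TSr -fmul_TSl -OmegaE IH -fmulA (Hc a) fmulA; try reflexivity.
rewrite -fmul_TSr -OmegaE Hg !Tmap_fw T_word_cat; try reflexivity.
Qed.

Lemma part1 : (forall w, central (Phi w)) -> (forall g, Psi [:: g] =~ fw [:: g]) ->
  forall p : fsum R, conv (conv id (@Tmap R)) id p =~ p.
Proof.
move=> Hc Hg; elim=> [|[c w] p IH]; first reflexivity.
rewrite conv_cons -PsiE (Psi_word Hc Hg) IH.
have -> : (c, w) :: p = fscale c (fw w) ++ p by rewrite /fscale /= mulr1.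
reflexivity.
Qed.
Lemma part2 : (forall w, central (Theta w)) ->
  (forall g, Omega [:: g] =~ Tmap (fw [:: g])) ->
  forall p : fsum R, conv (conv (@Tmap R) id) (@Tmap R) p =~ Tmap p.
Proof.
move=> Hc Hg; elim=> [|[c w] p IH]; first reflexivity.
rewrite conv_cons -OmegaE (Omega_word Hc Hg) IH Tmap_fw; reflexivity.
Qed.
End Words.

Section Gens.
Variable R : fieldType.
Variable q : R.
Local Notation "p =~ r" := (@Ueq R q p r) (at level 70).
Local Notation fw := (fword R).

Ltac fc := let w := fresh "w" in move=> w;
  rewrite /Phi /Theta /conv /Delta /Tmap /T_word /Defs.fprod /Delta_word /fscale /fsub /= /rev /= ?fcoef_cons' ?fcoef_nil;
  repeat match goal with |- context [?u == w] => case: (u == w) end;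
  rewrite ?(mul1r, mulr1, mul0r, mulr0, add0r, addr0, mulN1r, mulrN1, opprK);
  try rewrite -[1 : R]/(1%:~R : R); rewrite -?(rmorphN, rmorphD, rmorphB); done.

Lemma VPhiK : feq (Phi R [:: gK]) (fw [:: gK; gKb]). Proof. fc. Qed.
Lemma VPhiKb : feq (Phi R [:: gKb]) (fw [:: gKb; gK]). Proof. fc. Qed.
Lemma VPhiL : feq (Phi R [:: gL]) (fw [:: gL; gLb] ++ fw [:: gL; gKb] ++ fw [:: gK; gLb]). Proof. fc. Qed.
Lemma VPhiLb : feq (Phi R [:: gLb]) (fw [:: gLb; gL] ++ fw [:: gLb; gK] ++ fw [:: gKb; gL]). Proof. fc. Qed.
Lemma VPhiE : feq (Phi R [:: gE]) [::]. Proof. fc. Qed.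
Lemma VPhiF : feq (Phi R [:: gF]) (fw [:: gF] ++ fscale (-1) (fw [:: gKb; gK; gF] ++ fw [:: gKb; gL; gF] ++ fw [:: gLb; gK; gF] ++ fw [:: gLb; gL; gF])). Proof. fc. Qed.
Lemma VThK : feq (Theta R [:: gK]) (fw [:: gKb; gK]). Proof. fc. Qed.
Lemma VThKb : feq (Theta R [:: gKb]) (fw [:: gK; gKb]). Proof. fc. Qed.
Lemma VThL : feq (Theta R [:: gL]) (fw [:: gLb; gL] ++ fw [:: gLb; gK] ++ fw [:: gKb; gL]). Proof. fc. Qed.
Lemma VThLb : feq (Theta R [:: gLb]) (fw [:: gL; gLb] ++ fw [:: gL; gKb] ++ fw [:: gK; gLb]). Proof. fc. Qed.
Lemma VThE : feq (Theta R [:: gE]) (fw [:: gE] ++ fscale (-1) (fw [:: gE; gKb; gK] ++ fw [:: gE; gKb; gL] ++ fw [:: gE; gLb; gK] ++ fw [:: gE; gLb; gL])). Proof. fc. Qed.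
Lemma VThF : feq (Theta R [:: gF]) [::]. Proof. fc. Qed.

Local Notation GK := (fgen R gK). Local Notation GKb := (fgen R gKb).
Local Notation GL := (fgen R gL). Local Notation GLb := (fgen R gLb).
Local Notation GE := (fgen R gE). Local Notation GF := (fgen R gF).
Variable hq : q != 0.
Lemma hq2 : q ^+ 2 != 0. Proof. exact: expf_neq0. Qed.

Lemma fmul0l (p : fsum R) : fmul [::] p = [::]. Proof. by []. Qed.
Ltac wn := rewrite ?fw_cons ?fw_nil ?fmulA ?fmul1r.
Lemma relr a b : fw a =~ fw b -> forall r, fmul (fw a) r =~ fmul (fw b) r.
Proof. move=> H r; rewrite H; try reflexivity. Qed.
Lemma relrS a b c : fw a =~ fscale c (fw b) -> forall r, fmul (fw a) r =~ fscale c (fmul (fw b) r).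
Proof. move=> H r; rewrite H fmul_scalel; try reflexivity. Qed.
Lemma cancel_l (p x : fsum R) : p ++ x =~ p -> x =~ [::].
Proof.
move=> H; transitivity (fsub (p ++ x) p).
  apply: Ueq_feq => w; rewrite /fsub !fcoef_cat fcoef_scale mulN1r.
  by rewrite addrAC addrN add0r.
rewrite /fsub H; apply: Ueq_feq => w; rewrite fcoef_cat fcoef_scale fcoef_nil mulN1r subrr //.
Qed.
Lemma subself (x : fsum R) : x ++ fscale (-1) x =~ [::].
Proof. apply: Ueq_feq => w; rewrite fcoef_cat fcoef_scale fcoef_nil mulN1r subrr //. Qed.
Lemma central_gen_rest z : (forall g r, fmul z (fmul (fgen R g) r) =~ fmul (fgen R g) (fmul z r)) -> central q z.
Proof.
move=> H; apply: central_gen => g.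
rewrite -(fmulr1 (fgen R g)) H fmulr1 fmulr1; reflexivity.
Qed.
Lemma R0 r : fmul GK (fmul GKb (fmul GK r)) =~ fmul GK r.
Proof.
have H : fw [:: gK; gKb; gK] =~ fw [:: gK] := @ideal_rel R q 0 isT.
have := relr H r; wn; exact.
Qed.
Lemma R1 r : fmul GKb (fmul GK (fmul GKb r)) =~ fmul GKb r.
Proof.
have H : fw [:: gKb; gK; gKb] =~ fw [:: gKb] := @ideal_rel R q 1 isT.
have := relr H r; wn; exact.
Qed.
Lemma R2 r : fmul GK (fmul GKb r) =~ fmul GKb (fmul GK r).
Proof.
have H : fw [:: gK; gKb] =~ fw [:: gKb; gK] := @ideal_rel R q 2 isT.
have := relr H r; wn; exact.
Qed.
Lemma R3 r : fmul GL (fmul GLb (fmul GL r)) =~ fmul GL r.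
Proof.
have H : fw [:: gL; gLb; gL] =~ fw [:: gL] := @ideal_rel R q 3 isT.
have := relr H r; wn; exact.
Qed.
Lemma R4 r : fmul GLb (fmul GL (fmul GLb r)) =~ fmul GLb r.
Proof.
have H : fw [:: gLb; gL; gLb] =~ fw [:: gLb] := @ideal_rel R q 4 isT.
have := relr H r; wn; exact.
Qed.
Lemma R5 r : fmul GL (fmul GLb r) =~ fmul GLb (fmul GL r).
Proof.
have H : fw [:: gL; gLb] =~ fw [:: gLb; gL] := @ideal_rel R q 5 isT.
have := relr H r; wn; exact.
Qed.
Lemma R7 r : fmul GK (fmul GE r) =~ fscale (q ^+ 2) (fmul GE (fmul GK r)).
Proof.
have H : fw [:: gK; gE] =~ fscale (q ^+ 2) (fw [:: gE; gK]) := @ideal_rel R q 7 isT.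
have := relrS H r; wn; exact.
Qed.
Lemma R8 r : fmul GL (fmul GE r) =~ fscale (q ^+ 2) (fmul GE (fmul GL r)).
Proof.
have H : fw [:: gL; gE] =~ fscale (q ^+ 2) (fw [:: gE; gL]) := @ideal_rel R q 8 isT.
have := relrS H r; wn; exact.
Qed.
Lemma R9 r : fmul GKb (fmul GE r) =~ fscale (q ^- 2) (fmul GE (fmul GKb r)).
Proof.
have H : fw [:: gKb; gE] =~ fscale (q ^- 2) (fw [:: gE; gKb]) := @ideal_rel R q 9 isT.
have := relrS H r; wn; exact.
Qed.
Lemma R10 r : fmul GLb (fmul GE r) =~ fscale (q ^- 2) (fmul GE (fmul GLb r)).
Proof.
have H : fw [:: gLb; gE] =~ fscale (q ^- 2) (fw [:: gE; gLb]) := @ideal_rel R q 10 isT.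
have := relrS H r; wn; exact.
Qed.
Lemma R11 r : fmul GK (fmul GF r) =~ fscale (q ^- 2) (fmul GF (fmul GK r)).
Proof.
have H : fw [:: gK; gF] =~ fscale (q ^- 2) (fw [:: gF; gK]) := @ideal_rel R q 11 isT.
have := relrS H r; wn; exact.
Qed.
Lemma R12 r : fmul GL (fmul GF r) =~ fscale (q ^- 2) (fmul GF (fmul GL r)).
Proof.
have H : fw [:: gL; gF] =~ fscale (q ^- 2) (fw [:: gF; gL]) := @ideal_rel R q 12 isT.
have := relrS H r; wn; exact.
Qed.
Lemma R13 r : fmul GKb (fmul GF r) =~ fscale (q ^+ 2) (fmul GF (fmul GKb r)).
Proof.
have H : fw [:: gKb; gF] =~ fscale (q ^+ 2) (fw [:: gF; gKb]) := @ideal_rel R q 13 isT.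
have := relrS H r; wn; exact.
Qed.
Lemma R14 r : fmul GLb (fmul GF r) =~ fscale (q ^+ 2) (fmul GF (fmul GLb r)).
Proof.
have H : fw [:: gLb; gF] =~ fscale (q ^+ 2) (fw [:: gF; gLb]) := @ideal_rel R q 14 isT.
have := relrS H r; wn; exact.
Qed.
Lemma R6 r : fmul GK (fmul GKb r) ++ fmul GL (fmul GLb r) =~ r.
Proof.
have H : fw [:: gK; gKb] ++ fw [:: gL; gLb] =~ fone R := @ideal_rel R q 6 isT.
have : fmul (fw [:: gK; gKb] ++ fw [:: gL; gLb]) r =~ fmul (fone R) r by rewrite H; try reflexivity.
rewrite fmul_catl fmul1r; wn; exact.
Qed.
Lemma R6' r : fmul GL (fmul GLb r) ++ fmul GK (fmul GKb r) =~ r.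
Proof.
rewrite -[X in _ =~ X]R6; apply: Ueq_feq => w; rewrite !fcoef_cat addrC //.
Qed.
End Gens.

Section Der.
Variable R : fieldType.
Variable q : R.
Variable hq : q != 0.
Local Notation "p =~ r" := (@Ueq R q p r) (at level 70).
Local Notation fw := (fword R).
Local Notation GK := (fgen R gK). Local Notation GKb := (fgen R gKb).
Local Notation GL := (fgen R gL). Local Notation GLb := (fgen R gLb).
Local Notation GE := (fgen R gE). Local Notation GF := (fgen R gF).
Ltac wn := rewrite ?fw_cons ?fw_nil ?fmulA ?fmul1r.
Lemma fw_rest g w r : fmul (fw (g :: w)) r = fmul (fgen R g) (fmul (fw w) r).
Proof. by rewrite fw_cons fmulA. Qed.
Lemma fw_rest0 r : fmul (fw [::]) r = r.
Proof. by rewrite fw_nil fmul1r. Qed.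

Lemma Xe1_1 r : fmul GK (fmul GK (fmul GKb r)) =~ fmul GK r.
Proof. rewrite (R2 q r) (R0 q r); try reflexivity. Qed.
Lemma Xe2_1 r : fmul GKb (fmul GK (fmul GKb r)) =~ fmul GKb r.
Proof. exact: R1. Qed.
Lemma eX1_1 r : fmul GK (fmul GKb (fmul GK r)) =~ fmul GK r.
Proof. exact: R0. Qed.
Lemma eX2_1 r : fmul GK (fmul GKb (fmul GKb r)) =~ fmul GKb r.
Proof. rewrite (R2 q (fmul GKb r)) (R1 q r); try reflexivity. Qed.
Lemma ef_1 r : fmul GK (fmul GKb (fmul GL (fmul GLb r))) =~ [::].
Proof.
apply: (@cancel_l R q (fmul GK (fmul GKb r))).
rewrite -{1}(eX1_1 (fmul GKb r)) -!fmul_catR (R6 q r); try reflexivity.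
Qed.

Lemma Xe1_2 r : fmul GL (fmul GL (fmul GLb r)) =~ fmul GL r.
Proof. rewrite (R5 q r) (R3 q r); try reflexivity. Qed.
Lemma Xe2_2 r : fmul GLb (fmul GL (fmul GLb r)) =~ fmul GLb r.
Proof. exact: R4. Qed.
Lemma eX1_2 r : fmul GL (fmul GLb (fmul GL r)) =~ fmul GL r.
Proof. exact: R3. Qed.
Lemma eX2_2 r : fmul GL (fmul GLb (fmul GLb r)) =~ fmul GLb r.
Proof. rewrite (R5 q (fmul GLb r)) (R4 q r); try reflexivity. Qed.
Lemma ef_2 r : fmul GL (fmul GLb (fmul GK (fmul GKb r))) =~ [::].
Proof.
apply: (@cancel_l R q (fmul GL (fmul GLb r))).
rewrite -{1}(eX1_2 (fmul GLb r)) -!fmul_catR (R6' q r); try reflexivity.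
Qed.
Lemma cKL r : fmul GK (fmul GL r) =~ [::].
Proof.
rewrite -(eX1_2 r) -(Xe1_1 (fmul GL (fmul GLb (fmul GL r)))) (ef_1 (fmul GL r)) !fmul_nilr; try reflexivity.
Qed.
Lemma cKLb r : fmul GK (fmul GLb r) =~ [::].
Proof.
rewrite -(eX2_2 r) -(Xe1_1 (fmul GL (fmul GLb (fmul GLb r)))) (ef_1 (fmul GLb r)) !fmul_nilr; try reflexivity.
Qed.
Lemma cKbL r : fmul GKb (fmul GL r) =~ [::].
Proof.
rewrite -(eX1_2 r) -(Xe2_1 (fmul GL (fmul GLb (fmul GL r)))) (ef_1 (fmul GL r)) !fmul_nilr; try reflexivity.
Qed.
Lemma cKbLb r : fmul GKb (fmul GLb r) =~ [::].
Proof.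
rewrite -(eX2_2 r) -(Xe2_1 (fmul GL (fmul GLb (fmul GLb r)))) (ef_1 (fmul GLb r)) !fmul_nilr; try reflexivity.
Qed.
Lemma cLK r : fmul GL (fmul GK r) =~ [::].
Proof.
rewrite -(eX1_1 r) -(Xe1_2 (fmul GK (fmul GKb (fmul GK r)))) (ef_2 (fmul GK r)) !fmul_nilr; try reflexivity.
Qed.
Lemma cLKb r : fmul GL (fmul GKb r) =~ [::].
Proof.
rewrite -(eX2_1 r) -(Xe1_2 (fmul GK (fmul GKb (fmul GKb r)))) (ef_2 (fmul GKb r)) !fmul_nilr; try reflexivity.
Qed.
Lemma cLbK r : fmul GLb (fmul GK r) =~ [::].
Proof.
rewrite -(eX1_1 r) -(Xe2_2 (fmul GK (fmul GKb (fmul GK r)))) (ef_2 (fmul GK r)) !fmul_nilr; try reflexivity.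
Qed.
Lemma cLbKb r : fmul GLb (fmul GKb r) =~ [::].
Proof.
rewrite -(eX2_1 r) -(Xe2_2 (fmul GK (fmul GKb (fmul GKb r)))) (ef_2 (fmul GKb r)) !fmul_nilr; try reflexivity.
Qed.
Lemma central_e1 : central q (fw [:: gK; gKb]).
Proof.
apply: central_gen_rest => g r; rewrite (fw_rest gK) (fw_rest gKb) fw_rest0 (fw_rest gK) (fw_rest gKb) fw_rest0.
case: g.
- rewrite (eX1_1 r) (Xe1_1 r); try reflexivity.
- rewrite (eX2_1 r) (Xe2_1 r); try reflexivity.
- rewrite (cKbL r) (cLK (fmul GKb r)) !fmul_nilr; try reflexivity.
- rewrite (cKbLb r) (cLbK (fmul GKb r)) !fmul_nilr; try reflexivity.
- rewrite (R9 q r) fmul_scaleR (R7 q (fmul GKb r)) fscaleA (mulVf (hq2 hq)) fscale1; try reflexivity.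
- rewrite (R13 q r) fmul_scaleR (R11 q (fmul GKb r)) fscaleA (mulfV (hq2 hq)) fscale1; try reflexivity.
Qed.
Lemma central_e2 : central q (fw [:: gL; gLb]).
Proof.
apply: central_gen_rest => g r; rewrite (fw_rest gL) (fw_rest gLb) fw_rest0 (fw_rest gL) (fw_rest gLb) fw_rest0.
case: g.
- rewrite (cLbK r) (cKL (fmul GLb r)) !fmul_nilr; try reflexivity.
- rewrite (cLbKb r) (cKbL (fmul GLb r)) !fmul_nilr; try reflexivity.
- rewrite (eX1_2 r) (Xe1_2 r); try reflexivity.
- rewrite (eX2_2 r) (Xe2_2 r); try reflexivity.
- rewrite (R10 q r) fmul_scaleR (R8 q (fmul GLb r)) fscaleA (mulVf (hq2 hq)) fscale1; try reflexivity.
- rewrite (R14 q r) fmul_scaleR (R12 q (fmul GLb r)) fscaleA (mulfV (hq2 hq)) fscale1; try reflexivity.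
Qed.
End Der.

Section Fin.
Variable R : fieldType.
Variable q : R.
Variable hq : q != 0.
Local Notation "p =~ r" := (@Ueq R q p r) (at level 70).
Local Notation fw := (fword R).
Local Notation GK := (fgen R gK). Local Notation GKb := (fgen R gKb).
Local Notation GL := (fgen R gL). Local Notation GLb := (fgen R gLb).
Local Notation GE := (fgen R gE). Local Notation GF := (fgen R gF).
Local Notation one := (fone R).
Ltac wn := rewrite ?fw_cons ?fw_nil ?fmulA ?fmul1r.

Lemma TS1 g F : TS (Delta_word R [:: g]) F =~ TS (Delta_gen R g) F.
Proof. rewrite Delta_word_cons TS_tmul; apply: TS_ext => a b; rewrite TS_tone !cats0; reflexivity. Qed.
Lemma TSK F : TS (Delta_gen R gK) F = F [:: gK] [:: gK]. Proof. by rewrite /TS /= fscale1 cats0. Qed.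
Lemma TSKb F : TS (Delta_gen R gKb) F = F [:: gKb] [:: gKb]. Proof. by rewrite /TS /= fscale1 cats0. Qed.
Lemma TSL F : TS (Delta_gen R gL) F = F [:: gL] [:: gL] ++ (F [:: gL] [:: gK] ++ F [:: gK] [:: gL]).
Proof. by rewrite /TS /= !fscale1 cats0. Qed.
Lemma TSLb F : TS (Delta_gen R gLb) F = F [:: gLb] [:: gLb] ++ (F [:: gLb] [:: gKb] ++ F [:: gKb] [:: gLb]).
Proof. by rewrite /TS /= !fscale1 cats0. Qed.
Lemma TSE F : TS (Delta_gen R gE) F = F [::] [:: gE] ++ (F [:: gE] [:: gK] ++ F [:: gE] [:: gL]).
Proof. by rewrite /TS /= !fscale1 cats0. Qed.
Lemma TSF F : TS (Delta_gen R gF) F = F [:: gF] [::] ++ (F [:: gKb] [:: gF] ++ F [:: gLb] [:: gF]).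
Proof. by rewrite /TS /= !fscale1 cats0. Qed.

Lemma UPK : Phi R [:: gK] =~ fw [:: gK; gKb]. Proof. exact: Ueq_feq (VPhiK R). Qed.
Lemma UPKb : Phi R [:: gKb] =~ fw [:: gK; gKb].
Proof. rewrite (Ueq_feq q (VPhiKb R)); wn; rewrite -(R2 q one); reflexivity. Qed.
Lemma UPL : Phi R [:: gL] =~ fw [:: gL; gLb].
Proof. rewrite (Ueq_feq q (VPhiL R)); wn; rewrite (cLKb q one) (cKLb q one) !cats0; reflexivity. Qed.
Lemma UPLb : Phi R [:: gLb] =~ fw [:: gL; gLb].
Proof. rewrite (Ueq_feq q (VPhiLb R)); wn; rewrite (cLbK q one) (cKbL q one) -(R5 q one) !cats0; reflexivity. Qed.
Lemma UPE : Phi R [:: gE] =~ [::]. Proof. exact: Ueq_feq (VPhiE R). Qed.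
Lemma UPF : Phi R [:: gF] =~ [::].
Proof.
rewrite (Ueq_feq q (VPhiF R)); wn.
rewrite (cKbL q (fmul GF one)) (cLbK q (fmul GF one)) -(R2 q (fmul GF one)) -(R5 q (fmul GF one)).
rewrite !cat0s (R6 q (fmul GF one)) subself; reflexivity.
Qed.
Lemma UTK : Theta R [:: gK] =~ fw [:: gK; gKb].
Proof. rewrite (Ueq_feq q (VThK R)); wn; rewrite -(R2 q one); reflexivity. Qed.
Lemma UTKb : Theta R [:: gKb] =~ fw [:: gK; gKb]. Proof. exact: Ueq_feq (VThKb R). Qed.
Lemma UTL : Theta R [:: gL] =~ fw [:: gL; gLb].
Proof. rewrite (Ueq_feq q (VThL R)); wn; rewrite (cLbK q one) (cKbL q one) -(R5 q one) !cats0; reflexivity. Qed.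
Lemma UTLb : Theta R [:: gLb] =~ fw [:: gL; gLb].
Proof. rewrite (Ueq_feq q (VThLb R)); wn; rewrite (cLKb q one) (cKLb q one) !cats0; reflexivity. Qed.
Lemma UTE : Theta R [:: gE] =~ [::].
Proof.
rewrite (Ueq_feq q (VThE R)); wn.
rewrite (cKbL q one) (cLbK q one) !fmul_nilr -(R2 q one) -(R5 q one) !cat0s.
rewrite -fmul_catR (R6 q one) subself; reflexivity.
Qed.
Lemma UTF : Theta R [:: gF] =~ [::]. Proof. exact: Ueq_feq (VThF R). Qed.

Lemma G1 : forall g, central q (Phi R [:: g]).
Proof.
case.
- apply: (central_Ueq _ (central_e1 hq)); symmetry; exact: UPK.
- apply: (central_Ueq _ (central_e1 hq)); symmetry; exact: UPKb.
- apply: (central_Ueq _ (central_e2 hq)); symmetry; exact: UPL.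
- apply: (central_Ueq _ (central_e2 hq)); symmetry; exact: UPLb.
- apply: (central_Ueq _ (central_nil q)); symmetry; exact: UPE.
- apply: (central_Ueq _ (central_nil q)); symmetry; exact: UPF.
Qed.
Lemma G3 : forall g, central q (Theta R [:: g]).
Proof.
case.
- apply: (central_Ueq _ (central_e1 hq)); symmetry; exact: UTK.
- apply: (central_Ueq _ (central_e1 hq)); symmetry; exact: UTKb.
- apply: (central_Ueq _ (central_e2 hq)); symmetry; exact: UTL.
- apply: (central_Ueq _ (central_e2 hq)); symmetry; exact: UTLb.
- apply: (central_Ueq _ (central_nil q)); symmetry; exact: UTE.
- apply: (central_Ueq _ (central_nil q)); symmetry; exact: UTF.
Qed.
Lemma G2 : forall g, Psi R [:: g] =~ fw [:: g].
Proof.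
case; rewrite PsiE TS1.
- rewrite TSK UPK; wn; rewrite (R0 q one); reflexivity.
- rewrite TSKb UPKb; wn; rewrite (eX2_1 q one); reflexivity.
- rewrite TSL UPL UPK; wn.
  rewrite (R3 q one) (cLbK q one) (cKbL q one) !fmul_nilr !cats0; reflexivity.
- rewrite TSLb UPLb UPKb; wn.
  rewrite (eX2_2 q one) (cLbKb q one) (cKbLb q one) !fmul_nilr !cats0; reflexivity.
- rewrite TSE (Phi_nil q) UPE fmul1r !fmul0l !cats0; reflexivity.
- rewrite TSF UPF fmul0l UPKb UPLb cat0s; wn; rewrite (R6 q (fmul GF one)); reflexivity.
Qed.
Lemma TmK : Tmap (fw [:: gK]) = fmul GKb one. Proof. by rewrite Tmap_fw. Qed.
Lemma TmKb : Tmap (fw [:: gKb]) = fmul GK one. Proof. by rewrite Tmap_fw. Qed.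
Lemma TmL : Tmap (fw [:: gL]) = fmul GLb one. Proof. by rewrite Tmap_fw. Qed.
Lemma TmLb : Tmap (fw [:: gLb]) = fmul GL one. Proof. by rewrite Tmap_fw. Qed.
Lemma G4 : forall g, Omega R [:: g] =~ Tmap (fw [:: g]).
Proof.
case; rewrite OmegaE TS1.
- rewrite TSK UTK !TmK; wn; rewrite (eX2_1 q one); reflexivity.
- rewrite TSKb UTKb !TmKb; wn; rewrite (R0 q one); reflexivity.
- rewrite TSL UTL UTK !TmL TmK; wn.
  rewrite (eX2_2 q one) (cLbKb q one) (cKbLb q one) !fmul_nilr !cats0; reflexivity.
- rewrite TSLb UTLb UTKb !TmLb TmKb; wn.
  rewrite (R3 q one) (cLbK q one) (cKbL q one) !fmul_nilr !cats0; reflexivity.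
- rewrite TSE (Theta_nil q) UTE fmul1r !fmul0l !cats0; reflexivity.
- rewrite TSF UTF fmul0l UTKb UTLb cat0s.
  rewrite (fw_rest gK) (fw_rest gKb) fw_rest0 (fw_rest gL) (fw_rest gLb) fw_rest0.
  rewrite (R6 q _); reflexivity.
Qed.
End Fin.

Unset Implicit Arguments.
Theorem proposition9 (R : numClosedFieldType) (q : R)
  (hq0 : q != 0) (hq1 : q != 1) (hqm1 : q != -1) :
  (forall p : fsum R, Ueq q (conv (conv id (@Tmap R)) id p) p) /\
  (forall p : fsum R, Ueq q (conv (conv (@Tmap R) id) (@Tmap R) p) (Tmap p)).
Proof.
split.
- apply: part1; [exact: Phi_central (G1 hq0) | exact: G2].
- apply: part2; [exact: Theta_central (G3 hq0) | exact: G4].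
Qed.
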